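(* Let a group $G$ act freely on a connected weighted simplicial complex $\Omega$ on $[n]$, let $\mathcal H_0,\ldots,\mathcal H_n$ be Hilbert spaces with $\mathcal H_i=\mathcal H_j$ whenever $i,j$ lie in the same $G$-orbit, and $\mathcal V=\mathcal B(\mathcal H_0)\otimes\cdots\otimes\mathcal B(\mathcal H_n)$ (algebraic tensor product). Then every separable $G$-invariant $\sigma\in\mathcal V$ satisfies ${\rm sep\text{-}rank}_{(\Omega,G)}(\sigma)<\infty$.
   Context: $[n]=\{0,\ldots,n\}$. A weighted simplicial complex (wsc) on $[n]$ is a function $\Omega\colon\mathcal P([n])\to\mathbb N=\{0,1,\ldots\}$ such that $S_1\subseteq S_2$ implies $\Omega(S_1)\mid\Omega(S_2)$; simplices are sets with $\Omega(S)\neq0$, every singleton is assumed to be a simplex, facets are inclusion-maximal simplices, $\mathcal F$ is the set of facets. $\widetilde{\mathcal F}$ is the multiset containing each facet $F$ exactly $\Omega(F)$ times, with collapse map $c\colon\widetilde{\mathcal F}\to\mathcal F$; $\widetilde{\mathcal F}_i$ consists of the copies of facets containing $i$. $\Omega$ is connected if any two vertices are joined by a chain of vertices in which consecutive ones lie in a common facet. A group action of $G$ on $\Omega$ is an action of $G$ on $[n]$ with $\Omega(gS)=\Omega(S)$, together with an action of $G$ on $\widetilde{\mathcal F}$ such that $c(gx)=gc(x)$; it is free if the action on $\widetilde{\mathcal F}$ is free. $G$ acts on $\mathcal V$ by permuting tensor factors according to its action on $[n]$. $\mathcal B(\mathcal H)$ is the space of bounded operators. $\sigma$ is separable if $\sigma=\sum_{j=1}^r\sigma^{[0]}_j\otimes\cdots\otimes\sigma^{[n]}_j$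 with all $\sigma^{[i]}_j$ positive semidefinite. For $\beta\colon\widetilde{\mathcal F}_i\to\mathcal I$, ${}^g\beta\colon\widetilde{\mathcal F}_{gi}\to\mathcal I$ is $x\mapsto\beta(g^{-1}x)$; $\alpha_{\mid i}$ is restriction to $\widetilde{\mathcal F}_i$. An $(\Omega,G)$-decomposition of $\sigma$ is a finite set $\mathcal I$ and local operators $\sigma^{[i]}_\beta\in\mathcal B(\mathcal H_i)$ ($\beta\in\mathcal I^{\widetilde{\mathcal F}_i}$) with $\sigma=\sum_{\alpha\in\mathcal I^{\widetilde{\mathcal F}}}\sigma^{[0]}_{\alpha_{\mid0}}\otimes\cdots\otimes\sigma^{[n]}_{\alpha_{\mid n}}$ and $\sigma^{[i]}_\beta=\sigma^{[gi]}_{{}^g\beta}$ for all $i,g,\beta$. It is separable if all $\sigma^{[i]}_\beta$ are positive semidefinite; ${\rm sep\text{-}rank}_{(\Omega,G)}(\sigma)$ is the minimal $|\mathcal I|$ over separable $(\Omega,G)$-decompositions ($\infty$ if none). *)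

(* Defs.v *)
From HB Require Import structures.
From mathcomp Require Import all_boot all_order all_algebra all_fingroup.
From mathcomp Require Import reals.
From mathcomp Require Import complex.
Set Implicit Arguments.
Unset Strict Implicit.
Unset Printing Implicit Defensive.
Import Order.TTheory GRing.Theory Num.Theory.
Local Open Scope ring_scope.

Record hilbert (R : realType) := Hilbert {
  hsort :> lmodType R[i];
  hip : hsort -> hsort -> R[i];
  hip_linr : forall x (a : R[i]) y z, hip x (a *: y + z) = a * hip x y + hip x z;
  hip_conj : forall x y, hip y x = (hip x y)^*;
  hip_ge0 : forall x, 0 <= hip x x;
  hip_eq0 : forall x, hip x x = 0 -> x = 0;
  hip_complete : forall u : nat -> hsort,
    (forall e : R[i], 0 < e -> exists N, forall m k, (N <= m)%N -> (N <= k)%N ->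
        `|hip (u m - u k) (u m - u k)| < e) ->
    exists l : hsort, forall e : R[i], 0 < e -> exists N, forall m, (N <= m)%N ->
        `|hip (u m - l) (u m - l)| < e
}.

Definition is_bop (R : realType) (H : hilbert R) (A : H -> H) : Prop :=
  (forall (a : R[i]) x y, A (a *: x + y) = a *: A x + A y) /\
  exists M : R[i], forall x, `|hip (A x) (A x)| <= M * `|hip x x|.

Definition is_psd (R : realType) (H : hilbert R) (A : H -> H) : Prop :=
  forall x, 0 <= hip x (A x).

Definition castH (R : realType) (A B : hilbert R) (e : A = B) (x : A) : B :=
  match e in _ = B' return hsort B' with erefl => x end.

Definition castop (R : realType) (A B : hilbert R) (e : A = B) (f : A -> A) : B -> B :=
  fun x => castH e (f (castH (esym e) x)).

(* Elements of V = B(H_0) (x) ... (x) B(H_n) (algebraic tensor product) are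
   represented through the injective linear embedding
     a_0 (x) ... (x) a_n  |->  ((x_i),(y_i)) |-> prod_i <x_i, a_i y_i>
   into functions on prod_i H_i x prod_i H_i.  *)
Definition elem_tensor (R : realType) (n : nat) (H : 'I_n.+1 -> hilbert R)
  (a : forall i, H i -> H i) (x y : forall i, H i) : R[i] :=
  \prod_(i < n.+1) hip (x i) (a i (y i)).

(* Weighted simplicial complexes on [n] = {0,...,n} = 'I_n.+1           *)

Definition is_wsc (n : nat) (Om : {set 'I_n.+1} -> nat) : Prop :=
  (forall S1 S2 : {set 'I_n.+1}, S1 \subset S2 -> (Om S1 %| Om S2)%N) /\
  (forall i : 'I_n.+1, Om [set i] != 0%N).

Definition simplex (n : nat) (Om : {set 'I_n.+1} -> nat) (S : {set 'I_n.+1}) : bool :=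
  Om S != 0%N.

Definition facet (n : nat) (Om : {set 'I_n.+1} -> nat) (S : {set 'I_n.+1}) : bool :=
  simplex Om S && [forall T : {set 'I_n.+1}, (S \proper T) ==> ~~ simplex Om T].

Definition wsc_adj (n : nat) (Om : {set 'I_n.+1} -> nat) : rel 'I_n.+1 :=
  fun i j => [exists F : {set 'I_n.+1}, [&& facet Om F, i \in F & j \in F]].

Definition wsc_connected (n : nat) (Om : {set 'I_n.+1} -> nat) : Prop :=
  forall i j : 'I_n.+1, connect (wsc_adj Om) i j.

(* the multiset F~ : each facet F appears Om F times, as pairs (F, k), k < Om F *)
Definition Ftil (n : nat) (Om : {set 'I_n.+1} -> nat) : finType :=
  {x : {F : {set 'I_n.+1} & 'I_(Om F)} | facet Om (tag x)}.

Definition collapse (n : nat) (Om : {set 'I_n.+1} -> nat) (x : Ftil Om) : {set 'I_n.+1} :=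
  tag (val x).

Definition Ftil_at (n : nat) (Om : {set 'I_n.+1} -> nat) (i : 'I_n.+1) : finType :=
  {x : Ftil Om | i \in collapse x}.

Definition restr (n : nat) (Om : {set 'I_n.+1} -> nat) (D : nat)
  (al : {ffun Ftil Om -> 'I_D}) (i : 'I_n.+1) : {ffun Ftil_at Om i -> 'I_D} :=
  [ffun y => al (val y)].

(* Main.v *)
Require Import Defs.
From HB Require Import structures.
From mathcomp Require Import all_boot all_order all_algebra all_fingroup.
From mathcomp Require Import reals complex.
From Stdlib Require Import ProofIrrelevance.
Import Order.TTheory GRing.Theory Num.Theory.
Local Open Scope ring_scope.
Set Implicit Arguments.
Unset Strict Implicit.
Unset Printing Implicit Defensive.

Section Casts.
Variable R : realType.
Implicit Types A B C : hilbert R.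

Lemma castH_pi A B (e e' : A = B) x : castH e x = castH e' x.
Proof. by rewrite (proof_irrelevance _ e e'). Qed.

Lemma castH_hip A B (e : A = B) x y : hip (castH e x) (castH e y) = hip x y.
Proof. by case: B / e. Qed.

Lemma castHK A B (e : A = B) x : castH e (castH (esym e) x) = x.
Proof. by case: B / e in x *. Qed.

Lemma castKH A B (e : A = B) x : castH (esym e) (castH e x) = x.
Proof. by case: B / e. Qed.

Lemma castH_lin A B (e : A = B) (a : R[i]) x y :
  castH e (a *: x + y) = a *: castH e x + castH e y.
Proof. by case: B / e. Qed.

Lemma castH0 A B (e : A = B) : castH e 0 = 0.
Proof. by case: B / e. Qed.

Lemma castH_trans A B C (e1 : A = B) (e2 : B = C) x :
  castH e2 (castH e1 x) = castH (etrans e1 e2) x.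
Proof. by case: C / e2; case: B / e1. Qed.

Lemma hip_x0 (A : hilbert R) (x : A) : hip x 0 = 0.
Proof.
have h := hip_linr x 1 0 0; rewrite scale1r addr0 mul1r in h.
by apply: (@addrI _ (hip x 0)); rewrite addr0 -h.
Qed.

Lemma hip_scaler (A : hilbert R) (x y : A) a : hip x (a *: y) = a * hip x y.
Proof. by rewrite -[a *: y]addr0 hip_linr hip_x0 addr0. Qed.

Lemma hip_scalel (A : hilbert R) (x y : A) a : hip (a *: x) y = a^* * hip x y.
Proof. by rewrite hip_conj hip_scaler rmorphM /= -hip_conj. Qed.

Lemma hip_castr A B (e : A = B) x y : hip x (castH e y) = hip (castH (esym e) x) y.
Proof. by case: B / e in x *. Qed.

Lemma castop_trans A B C (e1 : A = B) (e2 : B = C) f :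
  castop e2 (castop e1 f) =1 castop (etrans e1 e2) f.
Proof. by case: C / e2; case: B / e1. Qed.

End Casts.

Unset Implicit Arguments.
Section Main.
Variables (R : realType) (gT : finGroupType) (n : nat) (Om : {set 'I_n.+1} -> nat)
  (to : {action gT &-> 'I_n.+1}) (toF : {action gT &-> Ftil Om}).
Hypothesis freeF : forall g x, toF x g = x -> g = 1%g.
Hypothesis hw : is_wsc Om.
Hypothesis hcol : forall g x, collapse (toF x g) = [set to i g | i in collapse x].

Definition rep x := odflt x [pick y in orbit toF [set: gT] x].

Lemma repJ x g : rep (toF x g) = rep x.
Proof. rewrite /rep. rewrite (@orbit_act _ _ toF [set: gT]%G g x) ?inE //.
case: pickP => // /(_ x); by rewrite orbit_refl. Qed.

Lemma rep_orbit x : exists g, toF (rep x) g = x.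
Proof.
rewrite /rep; case: pickP => [y Hy|/(_ x)]; last by rewrite orbit_refl.
by rewrite orbit_sym in Hy; case/orbitP: Hy => g _ <-; exists g.
Qed.

Definition phi x : gT := odflt 1%g [pick g | toF (rep x) g == x].

Lemma phiP x : toF (rep x) (phi x) = x.
Proof.
rewrite /phi; case: pickP => [g /eqP //|/= hn].
by case: (rep_orbit x) => g hg; have := hn g; rewrite hg eqxx.
Qed.

Lemma act_uniq r a b : toF r a = toF r b -> a = b.
Proof.
move=> h; have: toF r (a * b^-1)%g = r by rewrite actM h actK.
by move/freeF/eqP; rewrite -eq_mulgV1 => /eqP.
Qed.

Lemma phiJ x g : phi (toF x g) = (phi x * g)%g.
Proof. by apply: (@act_uniq (rep x)); rewrite -{1}(repJ x g) phiP actM phiP. Qed.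

Lemma facet_exists i : exists F, facet Om F && (i \in F).
Proof.
have Hi : simplex Om [set i] && (i \in [set i]) by rewrite /simplex hw.2 set11.
case: (@arg_maxnP _ [set i] (fun S => simplex Om S && (i \in S)) (fun S => #|S|) Hi) => S /andP[sS iS] maxS.
exists S; rewrite iS andbT /facet sS /=; apply/forallP => T; apply/implyP => pST.
apply/negP => sT; have := maxS T; rewrite sT (subsetP (proper_sub pST)) // => /(_ isT).
by rewrite /= leqNgt proper_card.
Qed.

Lemma facet_pos F : facet Om F -> (0 < Om F)%N.
Proof. by case/andP; rewrite lt0n. Qed.

Lemma facet_n0 F : facet Om F -> F != set0.
Proof.
case/andP => _ /forallP hF; apply/negP => /eqP F0.
have := hF [set ord0]; rewrite F0 proper0 /simplex hw.2 /=.
by apply/negP; rewrite negbK; apply/set0Pn; exists ord0; rewrite set11.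
Qed.

Definition mkF F (hF : facet Om F) : Ftil Om :=
  exist _ (Tagged (fun F => 'I_(Om F)) (Ordinal (facet_pos F hF))) hF.

Lemma Ftil_at_ex i : exists y : Ftil_at Om i, true.
Proof.
case: (facet_exists i) => F /andP[hF iF].
by exists (exist _ (mkF F hF) iF).
Qed.

Lemma Ftil_ex : exists x : Ftil Om, true.
Proof. by case: (Ftil_at_ex ord0) => y _; exists (val y). Qed.


Hypothesis hc : wsc_connected Om.
Variables (H : 'I_n.+1 -> hilbert R) (HG : forall g i, H (to i g) = H i).
Variables (r : nat) (a : 'I_r -> forall i, H i -> H i).
Hypothesis ha : forall j (i : 'I_n.+1), is_bop (a j i) /\ is_psd (a j i).

Definition D := #|{: 'I_r * gT}|.

Definition alpha (p : 'I_r * gT) : {ffun Ftil Om -> 'I_D} :=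
  [ffun x => enum_rank (p.1, (p.2 * (phi x)^-1)%g)].

Lemma alpha_inj_pt p q x : alpha p x = alpha q x -> p = q.
Proof.
rewrite !ffunE => /enum_rank_inj [] h1 /mulIg h2.
by case: p q h1 h2 => [? ?] [? ?] /= -> ->.
Qed.

Lemma alpha_inj : injective alpha.
Proof. case: Ftil_ex => x _ p q h; apply: (alpha_inj_pt p q x); by rewrite h. Qed.

Lemma restr_alpha_inj i p q : restr (alpha p) i = restr (alpha q) i -> p = q.
Proof.
case: (Ftil_at_ex i) => y _ h; apply: (alpha_inj_pt p q (val y)).
by have := congr1 (fun f : {ffun Ftil_at Om i -> 'I_D} => f y) h; rewrite !ffunE.
Qed.

Definition c : R[i] := (n.+1).-root (#|gT|%:R^-1).

Lemma c_ge0 : 0 <= c.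
Proof. by rewrite /c rootC_ge0 // invr_ge0 ler0n. Qed.

Lemma cX : c ^+ n.+1 = #|gT|%:R^-1.
Proof. by rewrite /c rootCK. Qed.

Definition op i (p : 'I_r * gT) : H i -> H i :=
  castop (HG (p.2^-1)%g i) (a p.1 (to i (p.2^-1)%g)).

Definition s i (b : {ffun Ftil_at Om i -> 'I_D}) : H i -> H i :=
  match [pick p | b == restr (alpha p) i] with
  | Some p => fun v => c *: op i p v
  | None => fun _ => 0
  end.

Lemma s_valid i p : s i (restr (alpha p) i) = fun v => c *: op i p v.
Proof.
rewrite /s; case: pickP => [q /eqP/restr_alpha_inj -> //|/(_ p)].
by rewrite eqxx.
Qed.

Lemma s_invalid i b : (forall p, b != restr (alpha p) i) -> s i b = fun _ => 0.
Proof. by move=> hn; rewrite /s; case: pickP => [p /eqP h|//]; have := hn p; rewrite h eqxx. Qed.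


Lemma castop_vert (f : forall i, H i -> H i) u v w (e : v = w)
  (p : H v = H u) (q : H w = H u) : castop p (f v) =1 castop q (f w).
Proof. case: w / e in q *; by move=> x; rewrite /castop (proof_irrelevance _ p q). Qed.

Lemma castH_scale (A B : hilbert R) (e : A = B) k x : castH e (k *: x) = k *: castH e x.
Proof. by case: B / e. Qed.

Lemma castop_scale (A B : hilbert R) (e : A = B) k (f : A -> A) :
  castop e (fun v => k *: f v) =1 (fun v => k *: castop e f v).
Proof. by move=> v; rewrite /castop castH_scale. Qed.

Lemma transfer1 i g (b : {ffun Ftil_at Om i -> 'I_D}) (b' : {ffun Ftil_at Om (to i g) -> 'I_D}) p : b = restr (alpha p) i ->
  (forall (x : Ftil_at Om i) (y : Ftil_at Om (to i g)),
     val y = toF (val x) g -> b' y = b x) ->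
  b' = restr (alpha (p.1, (p.2 * g)%g)) (to i g).
Proof.
move=> hb hbb; apply/ffunP => y.
have mem : i \in collapse (toF (val y) (g^-1)%g).
  rewrite hcol; apply/imsetP; exists (to i g); [exact: (valP y) | by rewrite actK].
rewrite (hbb (exist (fun z => i \in collapse z) _ mem : Ftil_at Om i) y) /=; last by rewrite actKV.
by rewrite hb !ffunE /= phiJ invMg invgK !mulgA.
Qed.

Lemma transfer2 i g (b : {ffun Ftil_at Om i -> 'I_D}) (b' : {ffun Ftil_at Om (to i g) -> 'I_D}) p : b' = restr (alpha p) (to i g) ->
  (forall (x : Ftil_at Om i) (y : Ftil_at Om (to i g)),
     val y = toF (val x) g -> b' y = b x) ->
  b = restr (alpha (p.1, (p.2 * g^-1)%g)) i.
Proof.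
move=> hb' hbb; apply/ffunP => x.
have mem : to i g \in collapse (toF (val x) g).
  by rewrite hcol; apply/imsetP; exists i => //; exact: (valP x).
rewrite -(hbb x (exist (fun z => to i g \in collapse z) _ mem : Ftil_at Om (to i g))) //.
by rewrite hb' !ffunE /= phiJ invMg !mulgA.
Qed.

Lemma s_equiv i g (b : {ffun Ftil_at Om i -> 'I_D}) (b' : {ffun Ftil_at Om (to i g) -> 'I_D}) :
  (forall (x : Ftil_at Om i) (y : Ftil_at Om (to i g)),
     val y = toF (val x) g -> b' y = b x) ->
  castop (HG g i) (s (to i g) b') =1 s i b.
Proof.
move=> hbb.
case: (pickP (fun p => b == restr (alpha p) i)) => [p /eqP hb | hn].
  rewrite (transfer1 i g b b' p hb hbb) hb !s_valid => v.
  rewrite castop_scale; congr (c *: _).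
  have e : to (to i g) ((p.2 * g)^-1)%g = to i (p.2^-1)%g.
    by rewrite -actM invMg mulgA mulgV mul1g.
  rewrite /op /=.
  transitivity (castop (etrans (HG ((p.2 * g)^-1)%g (to i g)) (HG g i))
                  (a p.1 (to (to i g) ((p.2 * g)^-1)%g)) v).
    exact: castop_trans.
  exact: (castop_vert (a p.1) i _ _ e).
rewrite (s_invalid i b (fun p => negbT (hn p))).
case: (pickP (fun p => b' == restr (alpha p) (to i g))) => [p /eqP hb' | hn'].
  by have := hn (p.1, (p.2 * g^-1)%g); rewrite /= {1}(transfer2 i g b b' p hb' hbb) eqxx.
rewrite (s_invalid (to i g) b'); last by move=> p; apply: negbT; exact: hn' p.
by move=> v; rewrite /castop castH0.
Qed.

Lemma scale_castop_ok (A B : hilbert R) (e : A = B) (f : A -> A) k :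
  0 <= k -> is_bop f -> is_psd f ->
  is_bop (fun v => k *: castop e f v) /\ is_psd (fun v => k *: castop e f v).
Proof.
move=> k0 [lf [M hM]] pf; split; first split.
- by move=> b x y; rewrite /castop castH_lin lf castH_lin scalerDr !scalerA mulrC.
- exists (`|k| * `|k| * M) => x.
  rewrite /castop hip_scalel hip_scaler !normrM norm_conjC -!mulrA.
  apply: ler_wpM2l; first exact: normr_ge0.
  apply: ler_wpM2l; first exact: normr_ge0.
  by have := hM (castH (esym e) x); rewrite !castH_hip; apply.
- by move=> x; rewrite /castop hip_scaler hip_castr; apply: mulr_ge0 => //; apply: pf.
Qed.

Lemma s_bop_psd i b : is_bop (s i b) /\ is_psd (s i b).
Proof.
rewrite /s; case: pickP => [p _|_].
  by rewrite /op; apply: scale_castop_ok; [exact: c_ge0 | exact: (ha _ _).1 | exact: (ha _ _).2].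
split; [split; [by move=> *; rewrite scaler0 addr0 | exists 0 => x; by rewrite hip_x0 normr0 mul0r] | by move=> x; rewrite hip_x0].
Qed.


Lemma sum_decomp (x y : forall i, H i) :
  \sum_(al : {ffun Ftil Om -> 'I_D}) elem_tensor (fun i => s i (restr al i)) x y
  = \sum_(p : 'I_r * gT) c ^+ n.+1 * \prod_(i < n.+1) hip (x i) (op i p (y i)).
Proof.
rewrite (bigID (fun al => al \in alpha @: setT)) /= [X in _ + X]big1 ?addr0.
  rewrite big_imset /=; last by move=> p q _ _; apply: alpha_inj.
  rewrite (eq_bigl xpredT) //; last by move=> p; rewrite in_setT.
  apply: eq_bigr => p _; rewrite /elem_tensor.
  rewrite (eq_bigr (fun i => c * hip (x i) (op i p (y i)))); last first.
    by move=> i _; rewrite (s_valid i p) hip_scaler.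
  by rewrite big_split /= prodr_const card_ord.
move=> al hal.
case: (boolP [forall i, [exists p, restr al i == restr (alpha p) i]]) => [hall | ].
  exfalso; move/negP: hal; apply.
  have: forall i, exists p, restr al i = restr (alpha p) i.
    by move=> i; have /existsP[p /eqP] := forallP hall i; exists p.
  case/fin_all_exists => P hP.
  have hadj : forall i j, wsc_adj Om i j -> P i = P j.
    move=> i j /existsP[F /and3P[hF iF jF]].
    pose z := mkF F hF.
    have e1 := congr1 (fun f : {ffun Ftil_at Om i -> 'I_D} =>
                 f (exist (fun z => i \in collapse z) z iF)) (hP i).
    have e2 := congr1 (fun f : {ffun Ftil_at Om j -> 'I_D} =>
                 f (exist (fun z => j \in collapse z) z jF)) (hP j).
    rewrite !ffunE /= in e1 e2.
    by apply: (alpha_inj_pt _ _ z); rewrite !ffunE -e1 -e2.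
  have hall0 : forall i, P i = P ord0.
    have cl : closed (wsc_adj Om) [pred k | P k == P ord0].
      by move=> u v /hadj huv; rewrite !inE /= huv.
    by move=> i; have := closed_connect cl (hc ord0 i); rewrite !inE eqxx => /esym/eqP.
  have -> : al = alpha (P ord0).
    apply/ffunP => z; case/set0Pn: (facet_n0 _ (valP z)) => i iz.
    have := congr1 (fun f : {ffun Ftil_at Om i -> 'I_D} =>
                 f (exist (fun z => i \in collapse z) z iz)) (hP i).
    by rewrite !ffunE /= hall0.
  by rewrite imset_f ?in_setT.
rewrite negb_forall; case/existsP => i; rewrite negb_exists => /forallP hn.
rewrite /elem_tensor (bigD1 i) //= s_invalid; first by rewrite hip_x0 mul0r.
by move=> p; exact: hn p.
Qed.

Lemma sum_k k (x y : forall i, H i) :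
  \sum_(j < r) \prod_(i < n.+1) hip (x i) (op i (j, k) (y i)) =
  \sum_(j < r) elem_tensor (a j) (fun i => castH (HG k i) (x (to i k)))
                                  (fun i => castH (HG k i) (y (to i k))).
Proof.
apply: eq_bigr => j _; rewrite /elem_tensor (reindex_inj (act_inj to k)) /=.
apply: eq_bigr => w _; rewrite /op /=.
rewrite (castop_vert (a j) (to w k) _ w (actK to k w) _ (esym (HG k w))).
by rewrite /castop hip_castr !(castH_pi (esym (esym (HG k w))) (HG k w)).
Qed.

End Main.

Theorem theorem3p14
  (R : realType) (gT : finGroupType) (n : nat)
  (Om : {set 'I_n.+1} -> nat)
  (to : {action gT &-> 'I_n.+1})
  (toF : {action gT &-> Ftil Om})
  (H : 'I_n.+1 -> hilbert R)
  (HG : forall (g : gT) (i : 'I_n.+1), H (to i g) = H i)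
  (sigma : (forall i, H i) -> (forall i, H i) -> R[i]) :
  (* Om is a connected weighted simplicial complex *)
  is_wsc Om -> wsc_connected Om ->
  (* (to, toF) is a group action of gT on Om *)
  (forall (g : gT) (S : {set 'I_n.+1}), Om [set to i g | i in S] = Om S) ->
  (forall (g : gT) (x : Ftil Om),
      collapse (toF x g) = [set to i g | i in collapse x]) ->
  (* the action is free *)
  (forall (g : gT) (x : Ftil Om), toF x g = x -> g = 1%g) ->
  (* sigma is separable *)
  (exists (r : nat) (a : 'I_r -> forall i, H i -> H i),
      (forall j i, is_bop (a j i) /\ is_psd (a j i)) /\
      forall x y, sigma x y = \sum_(j < r) elem_tensor (a j) x y) ->
  (* sigma is G-invariant *)
  (forall (g : gT) x y,
      sigma (fun i => castH (HG g i) (x (to i g)))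
            (fun i => castH (HG g i) (y (to i g))) = sigma x y) ->
  (* sep-rank_(Om,G)(sigma) < oo : a separable (Om,G)-decomposition exists *)
  exists (D : nat) (s : forall i : 'I_n.+1, {ffun Ftil_at Om i -> 'I_D} -> H i -> H i),
    [/\ forall i beta, is_bop (s i beta) /\ is_psd (s i beta),
        forall x y, sigma x y =
          \sum_(al : {ffun Ftil Om -> 'I_D})
             elem_tensor (fun i => s i (restr al i)) x y
      & forall (i : 'I_n.+1) (g : gT)
               (beta : {ffun Ftil_at Om i -> 'I_D})
               (beta' : {ffun Ftil_at Om (to i g) -> 'I_D}),
          (forall (x : Ftil_at Om i) (y : Ftil_at Om (to i g)),
              val y = toF (val x) g -> beta' y = beta x) ->
          castop (HG g i) (s (to i g) beta') =1 s i beta].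
Proof.
move=> hw hc _ hcol hfree [r [a [ha hsig]]] hinv.
exists (D gT r), (s R gT n Om to toF H HG r a); split.
- exact: (s_bop_psd R gT n Om to toF H HG r a ha).
- move=> x y; rewrite (sum_decomp R gT n Om to toF hw hc H HG r a x y).
  have -> : \sum_(p : 'I_r * gT) c R gT n ^+ n.+1 *
              \prod_(i < n.+1) hip (x i) (op R gT n to H HG r a i p (y i))
          = \sum_(k : gT) \sum_(j < r) c R gT n ^+ n.+1 *
              \prod_(i < n.+1) hip (x i) (op R gT n to H HG r a i (j, k) (y i)).
    by rewrite exchange_big pair_big; apply: eq_bigr => [[j k]].
  under eq_bigr => k _.
    rewrite -mulr_sumr (sum_k R gT n to H HG r a k x y) -hsig hinv.
  over.
  rewrite sumr_const cX -mulrnAl -mulr_natr mulVf ?mul1r //.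
  by rewrite pnatr_eq0 -lt0n; apply/card_gt0P; exists 1%g.
- move=> i g b b' hbb.
  exact: (s_equiv R gT n Om to toF hfree hw hcol H HG r a i g b b' hbb).
Qed.
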